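(* Suppose that the ''bounded polynomials have influential variables'' conjecture (stated in the context) holds, and let $\varepsilon,\delta>0$. Then given any quantum algorithm $Q$ that makes $T$ queries to a Boolean input $X\in\{0,1\}^N$, there exists a deterministic classical algorithm that makes $\mathrm{poly}(T,1/\varepsilon,1/\delta)$ queries, and that approximates $Q$'s acceptance probability to within an additive constant $\varepsilon$ on a $1-\delta$ fraction of inputs $X\in\{0,1\}^N$.
   Context: For a real polynomial $p:\mathbb{R}^N\to\mathbb{R}$ and $X\in\{0,1\}^N$, let $X^i$ denote $X$ with the $i$-th bit flipped. Define the $L_1$-variance $\mathrm{Vr}[p]:=\mathrm{E}_{X,Y\in\{0,1\}^N}[|p(X)-p(Y)|]$ and the influence of the $i$-th variable $\mathrm{Inf}_i[p]:=\mathrm{E}_{X\in\{0,1\}^N}[|p(X)-p(X^i)|]$. The conjecture (''bounded polynomials have influential variables''): for every polynomial $p:\mathbb{R}^N\to\mathbb{R}$ of degree $d$ such that $0\le p(X)\le 1$ for all $X\in\{0,1\}^N$ and $\mathrm{Vr}[p]\ge\varepsilon$, there exists an $i\in[N]$ such that $\mathrm{Inf}_i[p]\ge(\varepsilon/d)^{O(1)}$. *)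

(* Defs.v *)
From HB Require Import structures.
From mathcomp Require Import all_boot all_order all_algebra.
From mathcomp Require Import reals.
From mathcomp Require Import mpoly.
From mathcomp Require Import complex.
From mathcomp Require Import sesquilinear spectral.

Set Implicit Arguments.
Unset Strict Implicit.
Unset Printing Implicit Defensive.

Import Order.TTheory GRing.Theory Num.Theory.
Local Open Scope ring_scope.

Definition input (N : nat) := {ffun 'I_N -> bool}.

Definition flip (N : nat) (X : input N) (i : 'I_N) : input N :=
  [ffun j => if j == i then ~~ X j else X j].

Definition peval (R : realType) (N : nat) (p : {mpoly R[N]}) (X : input N) : R :=
  p.@[fun j => (X j)%:R].

Definition Vr (R : realType) (N : nat) (p : {mpoly R[N]}) : R :=
  (\sum_(X : input N) \sum_(Y : input N) `|peval p X - peval p Y|)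
    / (2 ^+ N * 2 ^+ N).

Definition Inf (R : realType) (N : nat) (p : {mpoly R[N]}) (i : 'I_N) : R :=
  (\sum_(X : input N) `|peval p X - peval p (flip X i)|) / 2 ^+ N.

(* total degree of a multivariate polynomial (deg 0 := 0) *)
Definition mdegree (R : realType) (N : nat) (p : {mpoly R[N]}) : nat :=
  (msize p).-1.

Definition influence_conjecture (R : realType) : Prop :=
  exists C : nat,
    forall (N d : nat) (p : {mpoly R[N]}) (eps : R),
      0 < eps ->
      mdegree p = d ->
      (forall X : input N, 0 <= peval p X <= 1) ->
      eps <= Vr p ->
      exists i : 'I_N, (eps / d%:R) ^+ C <= Inf p i.

(* Quantum query algorithms (phase-oracle model).                             *)
(* The Hilbert space has basis 'I_n.+1; each basis state k is labelled by     *)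
(* qidx k : option 'I_N, the index queried in that basis state (None = the    *)
(* "no query" index 0).  The oracle is O_X |k> = (-1)^{X_(qidx k)} |k>.      *)
(* A T-query algorithm is U_T O_X U_(T-1) ... U_1 O_X U_0 |0>, with unitary   *)
(* U_0..U_T, followed by measurement in the computational basis; it accepts   *)
(* when the outcome lies in qacc.                                             *)

Record qalg (R : realType) (N T : nat) := QAlg {
  qdim : nat;
  qidx : 'I_qdim.+1 -> option 'I_N;
  qU : 'I_T.+1 -> 'M[R[i]]_qdim.+1;
  qU_unitary : forall k, qU k \is unitarymx;
  qacc : {set 'I_qdim.+1}
}.

Arguments qdim {R N T} q.
Arguments qidx {R N T} q _.
Arguments qU {R N T} q _.
Arguments qacc {R N T} q.

Section QAlgSem.
Variables (R : realType) (N T : nat) (Q : qalg R N T).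

Definition oracle (X : input N) : 'M[R[i]]_((qdim Q).+1) :=
  diag_mx (\row_k (match qidx Q k with
                   | Some j => if X j then -1 else 1
                   | None => 1 end)).

Definition init_state : 'cV[R[i]]_((qdim Q).+1) := delta_mx 0 0.

Fixpoint qstate (X : input N) (k : nat) : 'cV[R[i]]_((qdim Q).+1) :=
  match k with
  | 0 => qU Q (inord 0) *m init_state
  | k'.+1 => qU Q (inord k) *m (oracle X *m qstate X k')
  end.

Definition sqmod (z : R[i]) : R := complex.Re z ^+ 2 + complex.Im z ^+ 2.

Definition acc_prob (X : input N) : R :=
  \sum_(k in qacc Q) sqmod (qstate X T k 0).

End QAlgSem.

(* Deterministic classical query algorithms = decision trees with real        *)
(* outputs; the number of queries is the depth.                              *)

Inductive dtree (R : Type) (N : nat) : Type :=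
| DLeaf of R
| DNode of 'I_N & dtree R N & dtree R N. (* query i; left = X_i false *)

Fixpoint deval (R : Type) (N : nat) (t : dtree R N) (X : input N) : R :=
  match t with
  | DLeaf r => r
  | DNode i t0 t1 => if X i then deval t1 X else deval t0 X
  end.

Fixpoint depth (R : Type) (N : nat) (t : dtree R N) : nat :=
  match t with
  | DLeaf _ => 0
  | DNode _ t0 t1 => (maxn (depth t0) (depth t1)).+1
  end.

(* Main.v *)
Require Import Defs.
From HB Require Import structures.
From mathcomp Require Import all_boot all_order all_algebra.
From mathcomp Require Import reals.
From mathcomp Require Import mpoly.
From mathcomp Require Import complex.
From mathcomp Require Import sesquilinear spectral.
From mathcomp Require Import ring lra.
From Stdlib Require Import Lia.
From mathcomp Require Import zify.
Import Order.TTheory GRing.Theory Num.Theory.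
Set Implicit Arguments.
Unset Strict Implicit.
Unset Printing Implicit Defensive.
Local Open Scope ring_scope.

Definition restr N := {ffun 'I_N -> option bool}.
Definition ov N (r : restr N) (Y : input N) : input N :=
  [ffun j => if r j is Some b then b else Y j].
Definition setr N (r : restr N) (i : 'I_N) (b : bool) : restr N :=
  [ffun j => if j == i then Some b else r j].
Definition avg (R : realType) N (h : input N -> R) : R := (\sum_Y h Y) / 2 ^+ N.

Lemma flipK N (X : input N) i : flip (flip X i) i = X.
Proof. by apply/ffunP => j; rewrite !ffunE; case: eqP => // ->; rewrite negbK. Qed.

Lemma flip_inj N (i : 'I_N) : injective (fun X : input N => flip X i).
Proof. by move=> X Y /(congr1 (fun Z => flip Z i)); rewrite !flipK. Qed.

Lemma sum_flip (R : realType) N (i : 'I_N) (P : pred (input N)) (F : input N -> R) :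
  \sum_(Y | P Y) F Y = \sum_(Y | P (flip Y i)) F (flip Y i).
Proof. exact: (reindex_inj (@flip_inj N i)). Qed.

Lemma flip_self N (X : input N) i : flip X i i = ~~ X i.
Proof. by rewrite ffunE eqxx. Qed.

Lemma ov_setr_same N (r : restr N) i b (Y : input N) :
  r i = None -> Y i = b -> ov (setr r i b) Y = ov r Y.
Proof.
move=> ri Yi; apply/ffunP => j; rewrite !ffunE.
by case: eqP => // ->; rewrite ri.
Qed.

Lemma ov_setr_flip N (r : restr N) i b (Y : input N) :
  ov (setr r i b) (flip Y i) = ov (setr r i b) Y.
Proof.
by apply/ffunP => j; rewrite !ffunE; case: eqP => // ji.
Qed.

Lemma sum_setr (R : realType) N (r : restr N) i b (G : input N -> R) :
  r i = None ->
  \sum_Y G (ov (setr r i b) Y) = 2 * \sum_(Y : input N | Y i == b) G (ov r Y).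
Proof.
move=> ri; rewrite (bigID (fun Y : input N => Y i == b)) /=.
rewrite (sum_flip i (fun Y : input N => Y i != b)) /=.
rewrite mulr2n mulrDl mul1r; congr (_ + _).
  by apply: eq_bigr => Y /eqP Yi; rewrite ov_setr_same.
apply: eq_big => Y.
  by rewrite flip_self; case: (Y i); case: b.
move=> H; have Yi : Y i = b by move: H; rewrite flip_self; case: (Y i); case: b.
by rewrite ov_setr_flip ov_setr_same.
Qed.
Lemma split_sum (R : realType) N (r : restr N) i (H : bool -> input N -> R) :
  r i = None ->
  \sum_(Y : input N) H (Y i) (ov r Y) =
  (\sum_Y H false (ov (setr r i false) Y) + \sum_Y H true (ov (setr r i true) Y)) / 2.
Proof.
move=> ri; rewrite !sum_setr // -mulrDr mulrC mulKf ?pnatr_eq0 //.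
rewrite (bigID (fun Y : input N => Y i == false)) /=; congr (_ + _).
  by apply: eq_bigr => Y /eqP ->.
by apply: eq_big => Y; case: (Y i).
Qed.
Lemma avg_split (R : realType) N (r : restr N) i (H : bool -> input N -> R) :
  r i = None ->
  avg (fun Y => H (Y i) (ov r Y)) =
  (avg (fun Y => H false (ov (setr r i false) Y)) + avg (fun Y => H true (ov (setr r i true) Y))) / 2.
Proof.
move=> ri; rewrite /avg (split_sum H ri).
by rewrite -mulrDl mulrAC.
Qed.

Definition VrF (R : realType) N (g : input N -> R) : R :=
  (\sum_(X : input N) \sum_(Y : input N) `|g X - g Y|) / (2 ^+ N * 2 ^+ N).
Definition InfF (R : realType) N (g : input N -> R) (i : 'I_N) : R :=
  (\sum_(X : input N) `|g X - g (flip X i)|) / 2 ^+ N.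

Lemma Vr_VrF (R : realType) N (p : {mpoly R[N]}) : Vr p = VrF (peval p).
Proof. by []. Qed.
Lemma Inf_InfF (R : realType) N (p : {mpoly R[N]}) i : Inf p i = InfF (peval p) i.
Proof. by []. Qed.

Lemma avg_le (R : realType) N (g h : input N -> R) :
  (forall Y, g Y <= h Y) -> avg g <= avg h.
Proof.
move=> gh; rewrite /avg ler_pM2r ?invr_gt0 ?exprn_gt0 //.
by apply: ler_sum => Y _; apply: gh.
Qed.

Lemma card_input N : #|{: input N}| = (2 ^ N)%N.
Proof. by rewrite card_ffun card_bool card_ord. Qed.
Lemma avg_cst (R : realType) N (c : R) : avg (fun _ : input N => c) = c.
Proof.
rewrite /avg (eq_bigl (fun Y => Y \in {: input N})) // sumr_const card_input.
rewrite -[c *+ _]mulr_natr natrX.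
by rewrite mulfK // expf_neq0 // pnatr_eq0.
Qed.
Lemma avg_abs_dev (R : realType) N (g : input N -> R) :
  avg (fun Y => `|avg g - g Y|) <= VrF g.
Proof.
have h : forall Y, `|avg g - g Y| <= avg (fun Z => `|g Z - g Y|).
  move=> Y; rewrite -{1}(avg_cst N (g Y)) /avg -mulrBl -sumrB normrM.
  rewrite [`|_^-1|]ger0_norm ?invr_ge0 ?exprn_ge0 // ler_pM2r ?invr_gt0 ?exprn_gt0 //.
  exact: ler_norm_sum.
apply: le_trans (avg_le h) _.
rewrite /avg /VrF invfM mulrA ler_pM2r ?invr_gt0 ?exprn_gt0 // -mulr_suml.
rewrite exchange_big /=.
by rewrite ler_pM2r ?invr_gt0 ?exprn_gt0 //.
Qed.

Lemma avgZr (R : realType) N (h : input N -> R) (c : R) :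
  avg (fun Y => h Y * c) = avg h * c.
Proof. by rewrite /avg -mulr_suml mulrAC. Qed.
Lemma ind_le (R : realType) (eps x : R) : 0 < eps -> 0 <= x ->
  (((eps < x)%R)%:R : R) <= x / eps.
Proof.
move=> e0 x0; case: ltP => h /=; last by rewrite divr_ge0 // ltW.
by rewrite ler_pdivlMr // mul1r ltW.
Qed.

Lemma leaf_bad (R : realType) N (eps : R) (g : input N -> R) : 0 < eps ->
  avg (fun Y => (((eps < `|avg g - g Y|)%R)%:R : R)) <= VrF g / eps.
Proof.
move=> e0; apply: le_trans (_ : avg (fun Y => `|avg g - g Y| * eps^-1) <= _).
  by apply: avg_le => Y; apply: ind_le.
by rewrite avgZr ler_pM2r ?invr_gt0 // avg_abs_dev.
Qed.

Definition gr (R : realType) N (f : input N -> R) (r : restr N) : input N -> R :=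
  fun Y => f (ov r Y).

Fixpoint build (R : realType) N (f : input N -> R) (eta : R) (r : restr N) (L : nat)
  : dtree R N :=
  if L is L'.+1 then
    if [pick i | eta <= InfF (gr f r) i] is Some i then
      DNode i (build f eta (setr r i false) L') (build f eta (setr r i true) L')
    else DLeaf _ (avg (gr f r))
  else DLeaf _ (avg (gr f r)).

Fixpoint Exh (R : realType) N (f : input N -> R) (eta : R) (r : restr N) (L : nat) : R :=
  if L is L'.+1 then
    if [pick i | eta <= InfF (gr f r) i] is Some i then
      (Exh f eta (setr r i false) L' + Exh f eta (setr r i true) L') / 2
    else 0
  else 1.

Lemma depth_build (R : realType) N (f : input N -> R) eta r L :
  (depth (build f eta r L) <= L)%N.
Proof.
elim: L r => [|L IH] r //=; case: pickP => [i _|_] //=.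
by rewrite ltnS geq_max !IH.
Qed.

Lemma Exh_ge0 (R : realType) N (f : input N -> R) eta r L : 0 <= Exh f eta r L.
Proof.
elim: L r => [|L IH] r /=; first exact: ler01.
by case: pickP => [i _|_] //; rewrite divr_ge0 ?addr_ge0.
Qed.


Lemma Exh_le1 (R : realType) N (f : input N -> R) eta r L : Exh f eta r L <= 1.
Proof.
elim: L r => [|L IH] r /=; first exact: lexx.
case: pickP => [i _|_]; last exact: ler01.
rewrite ler_pdivrMr // mul1r.
by apply: le_trans (lerD (IH _) (IH _)) _.
Qed.

Lemma pick_free (R : realType) N (f : input N -> R) eta r i :
  0 < eta -> eta <= InfF (gr f r) i -> r i = None.
Proof.
move=> e0; case ri: (r i) => [b|] // H; exfalso.
have : InfF (gr f r) i = 0.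
  rewrite /InfF big1 ?mul0r // => X _.
  rewrite /gr; have -> : ov r (flip X i) = ov r X.
    apply/ffunP => j; rewrite !ffunE; case: eqP => [->|]; by rewrite ?ri.
  by rewrite subrr normr0.
by move=> h; move: H; rewrite h; move/(lt_le_trans e0); rewrite ltxx.
Qed.
Lemma avg_eq (R : realType) N (g h : input N -> R) :
  (forall Y, g Y = h Y) -> avg g = avg h.
Proof. by move=> gh; rewrite /avg; congr (_ / _); apply: eq_bigr => Y _. Qed.

Definition Bad (R : realType) N (f : input N -> R) (eps : R) (r : restr N) (t : dtree R N) : R :=
  avg (fun Y => (((eps < `|deval t (ov r Y) - f (ov r Y)|)%R)%:R : R)).

Lemma ov_free N (r : restr N) i Y : r i = None -> ov r Y i = Y i.
Proof. by move=> ri; rewrite ffunE ri. Qed.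

Lemma I1 (R : realType) N (f : input N -> R) (eta eps epsp : R) :
  0 < eta -> 0 < eps -> 0 <= epsp ->
  (forall r, (forall i, InfF (gr f r) i < eta) -> VrF (gr f r) < epsp) ->
  forall L r, Bad f eps r (build f eta r L) <= Exh f eta r L + epsp / eps.
Proof.
move=> et0 e0 ep0 hleaf; elim=> [|L IH] r /=.
  apply: le_trans (_ : 1 <= _); last by rewrite lerDl divr_ge0 // ltW.
  rewrite /Bad; apply: le_trans (avg_le (h := fun _ => 1) _) _.
    by move=> Y; case: ltP.
  by rewrite avg_cst.
case: pickP => [i Hi|Hn].
  have ri := pick_free et0 Hi.
  pose H := fun b X =>
     (((eps < `|deval (if b then build f eta (setr r i true) L
                   else build f eta (setr r i false) L) X - f X|)%R)%:R : R).
  rewrite /Bad (avg_eq (h := fun Y => H (Y i) (ov r Y))); last first.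
    by move=> Y /=; rewrite /H ov_free //; case: (Y i).
  rewrite (avg_split H ri).
  apply: le_trans (_ : (Exh f eta (setr r i false) L + epsp / eps +
                       (Exh f eta (setr r i true) L + epsp / eps)) / 2 <= _).
    by rewrite ler_pM2r ?invr_gt0 //; apply: lerD; apply: IH.
  have h : forall a b c : R, (a + c + (b + c)) / 2 <= (a + b) / 2 + c by move=> *; lra.
  exact: h.
rewrite add0r /Bad (avg_eq (h := fun Y => (((eps < `|avg (gr f r) - gr f r Y|)%R)%:R : R))) //.
apply: le_trans (leaf_bad _ e0) _.
rewrite ler_pM2r ?invr_gt0 //; apply: ltW; apply: hleaf => i.
by rewrite ltNge Hn.
Qed.
Lemma sum_sq_le (R : realType) (I : finType) (h : I -> R) :
  (\sum_i h i) ^+ 2 <= #|I|%:R * \sum_i h i ^+ 2.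
Proof.
have H0 : 0 <= \sum_x \sum_y (h x - h y) ^+ 2.
  by apply: sumr_ge0 => x _; apply: sumr_ge0 => y _; apply: sqr_ge0.
have E1 : \sum_x \sum_y (h x - h y) ^+ 2 =
   (#|I|%:R * (\sum_i h i ^+ 2)) *+ 2 - ((\sum_i h i) ^+ 2) *+ 2.
  have -> : \sum_x \sum_y (h x - h y) ^+ 2 =
      \sum_x \sum_y (h x ^+ 2 + h y ^+ 2 - (h x * h y) *+ 2).
    by apply: eq_bigr => x _; apply: eq_bigr => y _; rewrite sqrrB addrAC.
  rewrite (eq_bigr (fun x => \sum_y (h x ^+ 2 + h y ^+ 2) - \sum_y (h x * h y) *+ 2)); last first.
    by move=> x _; rewrite sumrB.
  rewrite sumrB; congr (_ - _).
    rewrite (eq_bigr (fun x => h x ^+ 2 *+ #|I| + \sum_y h y ^+ 2)); last first.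
      by move=> x _; rewrite big_split /= sumr_const.
    rewrite big_split /= sumr_const sumrMnl -[_ *+ #|I|]mulr_natl.
    by rewrite mulr2n.
  rewrite (eq_bigr (fun x => (\sum_y h x * h y) *+ 2)); last first.
    by move=> x _; rewrite sumrMnl.
  rewrite sumrMnl; congr (_ *+ 2).
  rewrite expr2 mulr_suml; apply: eq_bigr => x _.
  by rewrite mulr_sumr.
move: H0; rewrite E1 subr_ge0 !mulr2n.
move: (#|I|%:R * (\sum_i h i ^+ 2)) ((\sum_i h i) ^+ 2) => a b; lra.
Qed.

Lemma avg_sq_le (R : realType) N (h : input N -> R) :
  avg h ^+ 2 <= avg (fun Y => h Y ^+ 2).
Proof.
rewrite /avg expr_div_n.
have M0 : (0 : R) < 2 ^+ N by rewrite exprn_gt0.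
have H := sum_sq_le h; rewrite card_input natrX in H.
rewrite [2 ^+ N ^+ 2]expr2 invfM mulrA ler_pM2r ?invr_gt0 // ler_pdivrMr //.
by rewrite mulrC.
Qed.

Lemma avgD (R : realType) N (g h : input N -> R) :
  avg (fun Y => g Y + h Y) = avg g + avg h.
Proof. by rewrite /avg big_split /= mulrDl. Qed.

Lemma avg_ge0 (R : realType) N (g : input N -> R) :
  (forall Y, 0 <= g Y) -> 0 <= avg g.
Proof. by move=> h; rewrite /avg divr_ge0 ?exprn_ge0 // sumr_ge0. Qed.


Lemma sum_free_split (R : realType) N (r : restr N) i b (F : 'I_N -> R) :
  r i = None ->
  \sum_(j | r j == None) F j = \sum_(j | setr r i b j == None) F j + F i.
Proof.
move=> ri; rewrite (bigD1 i) ?ri //= addrC; congr (_ + _).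
by apply: eq_bigl => j; rewrite ffunE; case: (j =P i) => [->|_]; rewrite ?andbF ?andbT.
Qed.

Lemma flip_ov N (r : restr N) i Y : r i = None -> flip (ov r Y) i = ov r (flip Y i).
Proof.
move=> ri; apply/ffunP => j; rewrite !ffunE.
case: (j =P i) => [->|ne]; first by rewrite ri.
by case: (r j).
Qed.

Definition Pot (R : realType) N (f : input N -> R) (r : restr N) : R :=
  avg (fun Y => \sum_(j | r j == None) (f (ov r Y) - f (flip (ov r Y) j)) ^+ 2).

Lemma Pot_ge0 (R : realType) N (f : input N -> R) r : 0 <= Pot f r.
Proof. by apply: avg_ge0 => Y; apply: sumr_ge0 => j _; apply: sqr_ge0. Qed.

Lemma Pot_split (R : realType) N (f : input N -> R) (r : restr N) (i : 'I_N) : r i = None ->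
  Pot f r = (Pot f (setr r i false) + Pot f (setr r i true)) / 2 +
            avg (fun Y => (f (ov r Y) - f (flip (ov r Y) i)) ^+ 2).
Proof.
move=> ri.
pose D := fun X : input N => (f X - f (flip X i)) ^+ 2.
pose H := fun (b : bool) X => \sum_(j | r j == None) (f X - f (flip X j)) ^+ 2.
rewrite /Pot (avg_eq (h := fun Y => H (Y i) (ov r Y))) // (avg_split H ri).
rewrite (avg_eq (g := fun Y => H false _) (h := fun Y => 
   \sum_(j | setr r i false j == None) (f (ov (setr r i false) Y) - f (flip (ov (setr r i false) Y) j)) ^+ 2
   + D (ov (setr r i false) Y))); last by move=> Y; rewrite /H (@sum_free_split _ _ r i false _ ri).
rewrite (avg_eq (g := fun Y => H true _) (h := fun Y => 
   \sum_(j | setr r i true j == None) (f (ov (setr r i true) Y) - f (flip (ov (setr r i true) Y) j)) ^+ 2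
   + D (ov (setr r i true) Y))); last by move=> Y; rewrite /H (@sum_free_split _ _ r i true _ ri).
rewrite !avgD.
rewrite (avg_eq (g := fun Y => (f (ov r Y) - f (flip (ov r Y) i)) ^+ 2) (h := fun Y => (fun _ => D) (Y i) (ov r Y))) //.
rewrite (avg_split (fun _ => D) ri) /=.
set a := avg _; set b := avg _; set c := avg _; set d := avg _.
clearbody a b c d; lra.
Qed.

Lemma Pot_step (R : realType) N (f : input N -> R) (r : restr N) (i : 'I_N) (eta : R) :
  0 < eta -> eta <= InfF (gr f r) i ->
  eta ^+ 2 <= avg (fun Y => (f (ov r Y) - f (flip (ov r Y) i)) ^+ 2).
Proof.
move=> e0 H; have ri := pick_free e0 H.
have E : InfF (gr f r) i = avg (fun Y => `|f (ov r Y) - f (flip (ov r Y) i)|).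
  rewrite /InfF /avg /gr; congr (_ * _); apply: eq_bigr => Y _; by rewrite flip_ov.
rewrite E in H.
rewrite (avg_eq (h := fun Y => `|f (ov r Y) - f (flip (ov r Y) i)| ^+ 2)); last first.
  by move=> Y; rewrite real_normK // num_real.
apply: le_trans (avg_sq_le _).
by rewrite !expr2 ler_pM // ltW.
Qed.
Lemma I2 (R : realType) N (f : input N -> R) (eta : R) : 0 < eta ->
  forall L r, L%:R * eta ^+ 2 * Exh f eta r L <= Pot f r.
Proof.
move=> e0; elim=> [|L IH] r /=; first by rewrite mul0r mul0r Pot_ge0.
case: pickP => [i Hi|_]; last by rewrite mulr0 Pot_ge0.
have ri := pick_free e0 Hi.
rewrite (Pot_split f ri).
have hA := Pot_step e0 Hi.
have h1 := IH (setr r i false); have h2 := IH (setr r i true).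
have h3 := Exh_le1 f eta (setr r i false) L; have h4 := Exh_le1 f eta (setr r i true) L.
have h5 := Exh_ge0 f eta (setr r i false) L; have h6 := Exh_ge0 f eta (setr r i true) L.
have hK : 0 <= L%:R * eta ^+ 2 by rewrite mulr_ge0 ?sqr_ge0.
have he : 0 <= eta ^+ 2 by rewrite sqr_ge0.
move: hA h1 h2 h3 h4 h5 h6 hK he.
rewrite -natr1 mulrDl mul1r.
move: (Exh f eta (setr r i false) L) (Exh f eta (setr r i true) L) => E0 E1.
move: (Pot f (setr r i false)) (Pot f (setr r i true)) => P0 P1.
move: (avg _) (L%:R * eta ^+ 2) (eta ^+ 2) => A K e.
move=> *; nra.
Qed.

Lemma Pot_le (R : realType) N (f : input N -> R) (B : R) r :
  (forall X, \sum_j (f X - f (flip X j)) ^+ 2 <= B) -> Pot f r <= B.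
Proof.
move=> hB; rewrite -(avg_cst N B); apply: avg_le => Y.
apply: le_trans (hB (ov r Y)).
rewrite [X in _ <= X](bigID (fun j => r j == None)) /= lerDl.
by apply: sumr_ge0 => j _; apply: sqr_ge0.
Qed.

Definition r0 N : restr N := [ffun _ => None].

Lemma ov_r0 N (Y : input N) : ov (r0 N) Y = Y.
Proof. by apply/ffunP => j; rewrite !ffunE. Qed.

Lemma tree_bad (R : realType) N (f : input N -> R) (eta eps epsp B : R) L :
  0 < eta -> 0 < eps -> 0 <= epsp -> (0 < L)%N ->
  (forall r, (forall i, InfF (gr f r) i < eta) -> VrF (gr f r) < epsp) ->
  (forall X, \sum_j (f X - f (flip X j)) ^+ 2 <= B) ->
  Bad f eps (r0 N) (build f eta (r0 N) L) <= B / (L%:R * eta ^+ 2) + epsp / eps.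
Proof.
move=> et0 e0 ep0 L0 hleaf hB.
apply: le_trans (I1 et0 e0 ep0 hleaf L (r0 N)) _.
rewrite lerD2r.
have hK : 0 < L%:R * eta ^+ 2 by rewrite mulr_gt0 ?ltr0n // exprn_gt0.
rewrite ler_pdivlMr // mulrC.
exact: le_trans (I2 f et0 L (r0 N)) (Pot_le _ hB).
Qed.
Lemma count_good (R : realType) N (f : input N -> R) (eps : R) (t : dtree R N) :
  (#|[set X : input N | `|deval t X - f X| <= eps]|%:R : R) =
  2 ^+ N * (1 - Bad f eps (r0 N) t).
Proof.
rewrite -sum1_card natr_sum big_mkcond /=.
rewrite (eq_bigr (fun X : input N => 1 - (((eps < `|deval t X - f X|)%R)%:R : R))); last first.
  by move=> X _; rewrite inE; case: leP => _ /=; rewrite ?subr0 ?subrr.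
rewrite sumrB.
have -> : \sum_(X : input N) (1 : R) = 2 ^+ N.
  by rewrite (eq_bigl (fun Y => Y \in {: input N})) // sumr_const card_input natrX.
rewrite /Bad /avg mulrBr mulr1 [2 ^+ N * _]mulrC divfK ?expf_neq0 ?pnatr_eq0 //.
by congr (_ - _); apply: eq_bigr => Y _; rewrite ov_r0.
Qed.

Definition norm2 (R : realType) m (v : 'cV[R[i]]_m) : R := \sum_k sqmod (v k 0).

Lemma sqmod_ge0 (R : realType) (z : R[i]) : 0 <= sqmod z.
Proof. by rewrite /sqmod addr_ge0 ?sqr_ge0. Qed.

Lemma norm2_ge0 (R : realType) m (v : 'cV[R[i]]_m) : 0 <= norm2 v.
Proof. by apply: sumr_ge0 => k _; apply: sqmod_ge0. Qed.

Lemma conj_mul_sqmod (R : realType) (z : R[i]) : Num.conj z * z = (sqmod z)%:C%C.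
Proof.
case: z => a b; rewrite /sqmod /=.
apply/eqP; rewrite eq_complex /=; apply/andP; split; apply/eqP.
  ring.
ring.
Qed.

Local Open Scope sesquilinear_scope.
Lemma norm2_mx (R : realType) m (v : 'cV[R[i]]_m) :
  (v ^t* *m v) 0 0 = ((norm2 v)%:C)%C.
Proof.
rewrite !mxE /norm2 raddf_sum /=; apply: eq_bigr => k _.
by rewrite !mxE conj_mul_sqmod.
Qed.

Lemma norm2_unitary (R : realType) m (U : 'M[R[i]]_m) (v : 'cV[R[i]]_m) :
  U \is unitarymx -> norm2 (U *m v) = norm2 v.
Proof.
move=> uU; apply: (@complexI R); rewrite -!norm2_mx.
by rewrite trmx_mul map_mxM mulmxA mulmxKtV.
Qed.
Definition osign (R : realType) N (X : input N) (o : option 'I_N) : R[i] :=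
  match o with Some j => if X j then -1 else 1 | None => 1 end.
Arguments osign {R N} X o.

Lemma oracleE (R : realType) N T (Q : qalg R N T) X (v : 'cV[R[i]]_((qdim Q).+1)) k :
  (oracle Q X *m v) k 0 = osign X (qidx Q k) * v k 0.
Proof. by rewrite mul_diag_mx !mxE. Qed.

Lemma sqmod_sign (R : realType) N (X : input N) o (z : R[i]) :
  sqmod (osign X o * z) = sqmod z.
Proof.
rewrite /osign; case: o => [j|]; last by rewrite mul1r.
case: (X j); last by rewrite mul1r.
by rewrite mulN1r; case: z => a b; rewrite /sqmod /= !sqrrN.
Qed.

Lemma norm2_oracle (R : realType) N T (Q : qalg R N T) X (v : 'cV[R[i]]_((qdim Q).+1)) :
  norm2 (oracle Q X *m v) = norm2 v.
Proof. by apply: eq_bigr => k _; rewrite oracleE sqmod_sign. Qed.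
Lemma norm2_init (R : realType) N T (Q : qalg R N T) : norm2 (init_state Q) = 1.
Proof.
rewrite /norm2 (bigD1 ord0) //= big1 ?addr0.
  by rewrite /init_state mxE !eqxx /sqmod /= expr0n /= addr0 expr1n.
by move=> k /negbTE k0; rewrite /init_state mxE k0 /sqmod /= expr0n /= addr0.
Qed.

Lemma norm2_qstate (R : realType) N T (Q : qalg R N T) X k :
  norm2 (qstate Q X k) = 1.
Proof.
elim: k => [|k IH] /=; first by rewrite norm2_unitary ?qU_unitary // norm2_init.
by rewrite norm2_unitary ?qU_unitary // norm2_oracle IH.
Qed.

Lemma acc_prob_bounds (R : realType) N T (Q : qalg R N T) X :
  0 <= acc_prob Q X <= 1.
Proof.
apply/andP; split; first by apply: sumr_ge0 => k _; apply: sqmod_ge0.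
rewrite -(norm2_qstate Q X T) /norm2 [X in _ <= X](bigID (fun k => k \in qacc Q)) /=.
by rewrite lerDl sumr_ge0 // => k _; apply: sqmod_ge0.
Qed.
Definition bev (R : realType) N (Y : input N) : 'I_N -> R := fun j => (Y j)%:R.

Definition spol (R : realType) N (r : restr N) (o : option 'I_N) : {mpoly R[N]} :=
  match o with
  | Some j => match r j with
              | Some b => (if b then -1 else 1)
              | None => 1 + (-2 : R) *: 'X_j
              end
  | None => 1
  end.

Lemma spolE (R : realType) N (r : restr N) o (Y : input N) :
  ((spol R r o).@[bev R Y])%:C%C = osign (ov r Y) o.
Proof.
rewrite /spol /osign; case: o => [j|]; last by rewrite meval1.
rewrite ffunE; case: (r j) => [b|].
  by case: b; rewrite ?mevalN meval1 // rmorphN.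
rewrite mevalD meval1 mevalZ mevalXU /bev.
case: (Y j) => /=; last by rewrite mulr0 addr0.
have -> : 1 + -2 * 1%:R = -1 :> R by lra.
by rewrite rmorphN.
Qed.
Fixpoint ampf (R : realType) N T (Q : qalg R N T) (r : restr N) (k : nat)
   : 'I_(qdim Q).+1 -> {mpoly R[N]} * {mpoly R[N]} :=
  match k with
  | 0 => fun m => ((complex.Re (qU Q (inord 0) m 0))%:MP_[N],
                   (complex.Im (qU Q (inord 0) m 0))%:MP_[N])
  | k'.+1 => fun m =>
     (\sum_l (complex.Re (qU Q (inord k) m l) *: (spol R r (qidx Q l) * (@ampf R N T Q r k' l).1)
              - complex.Im (qU Q (inord k) m l) *: (spol R r (qidx Q l) * (@ampf R N T Q r k' l).2)),
      \sum_l (complex.Re (qU Q (inord k) m l) *: (spol R r (qidx Q l) * (@ampf R N T Q r k' l).2)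
              + complex.Im (qU Q (inord k) m l) *: (spol R r (qidx Q l) * (@ampf R N T Q r k' l).1)))
  end.

Lemma Re_sum (R : realType) (I : finType) (F : I -> R[i]) :
  complex.Re (\sum_i F i) = \sum_i complex.Re (F i).
Proof. by apply: (big_morph _ (fun x y => _) (erefl _)) => [[a b] [c d]]. Qed.
Lemma Im_sum (R : realType) (I : finType) (F : I -> R[i]) :
  complex.Im (\sum_i F i) = \sum_i complex.Im (F i).
Proof. by apply: (big_morph _ (fun x y => _) (erefl _)) => [[a b] [c d]]. Qed.

Lemma ReIm_mulC (R : realType) (a z : R[i]) (c : R) :
  complex.Re (a * (c%:C%C * z)) = complex.Re a * (c * complex.Re z) - complex.Im a * (c * complex.Im z) /\
  complex.Im (a * (c%:C%C * z)) = complex.Re a * (c * complex.Im z) + complex.Im a * (c * complex.Re z).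
Proof. by case: a => a1 a2; case: z => z1 z2; split => /=; ring. Qed.

Lemma meval_sum (R : realType) N (I : finType) (v : 'I_N -> R) (F : I -> {mpoly R[N]}) :
  (\sum_i F i).@[v] = \sum_i (F i).@[v].
Proof. by apply: (big_morph _ (mevalD v) (meval0 v)). Qed.

Lemma ampfE (R : realType) N T (Q : qalg R N T) (r : restr N) (Y : input N) k m :
  complex.Re (qstate Q (ov r Y) k m 0) = ((ampf r k m).1).@[bev R Y] /\
  complex.Im (qstate Q (ov r Y) k m 0) = ((ampf r k m).2).@[bev R Y].
Proof.
elim: k m => [|k IH] m /=.
  rewrite !mevalC /init_state !mxE (bigD1 ord0) //= big1 ?addr0.
    by rewrite !mxE !eqxx mulr1.
  by move=> l /negbTE l0; rewrite !mxE l0 mulr0.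
rewrite !mxE !meval_sum Re_sum Im_sum; split; apply: eq_bigr => l _.
  rewrite oracleE -spolE (ReIm_mulC _ _ _).1; have [-> ->] := IH l.
  by rewrite mevalB !mevalZ !mevalM.
rewrite oracleE -spolE (ReIm_mulC _ _ _).2; have [-> ->] := IH l.
by rewrite mevalD !mevalZ !mevalM.
Qed.

Lemma meval_sumP (R : realType) N (I : finType) (P : pred I) (v : 'I_N -> R) (F : I -> {mpoly R[N]}) :
  (\sum_(i | P i) F i).@[v] = \sum_(i | P i) (F i).@[v].
Proof. by apply: (big_morph _ (mevalD v) (meval0 v)). Qed.

Definition accp (R : realType) N T (Q : qalg R N T) (r : restr N) : {mpoly R[N]} :=
  \sum_(k | k \in qacc Q) ((ampf r T k).1 ^+ 2 + (ampf r T k).2 ^+ 2).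

Lemma accpE (R : realType) N T (Q : qalg R N T) (r : restr N) (Y : input N) :
  peval (accp Q r) Y = acc_prob Q (ov r Y).
Proof.
rewrite /peval /accp meval_sumP /acc_prob; apply: eq_bigr => k _.
have [E1 E2] := ampfE r Y T k.
by rewrite mevalD !mevalM /sqmod -E1 -E2 !expr2.
Qed.

Lemma msize_sum_le (R : realType) N (I : finType) (P : pred I) (F : I -> {mpoly R[N]}) b :
  (forall i, P i -> (msize (F i) <= b)%N) -> (msize (\sum_(i | P i) F i) <= b)%N.
Proof.
move=> h; apply: leq_trans (msize_sum _ _ _) _.
by apply/bigmax_leqP.
Qed.

Lemma msize_spol (R : realType) N (r : restr N) o : (msize (spol R r o) <= 2)%N.
Proof.
rewrite /spol; case: o => [j|]; last by rewrite msize1.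
case: (r j) => [[]|].
- by rewrite msizeN msize1.
- by rewrite msize1.
apply: leq_trans (msizeD_le _ _) _; rewrite msize1 geq_max /=.
by apply: leq_trans (msizeZ_le _ _) _; rewrite msizeX mdeg1.
Qed.


Lemma msize_spolM (R : realType) N (r : restr N) o (p : {mpoly R[N]}) (c : R) b :
  (msize p <= b)%N -> (msize (c *: (spol R r o * p)) <= b + 3)%N.
Proof.
move=> hp; apply: leq_trans (msizeZ_le _ _) _.
apply: leq_trans (msizeM_le _ _) _.
have := msize_spol R r o; lia.
Qed.

Lemma msize_ampf (R : realType) N T (Q : qalg R N T) (r : restr N) k (m : 'I_(qdim Q).+1) :
  (msize (ampf r k m).1 <= 3 * k + 1)%N /\ (msize (ampf r k m).2 <= 3 * k + 1)%N.
Proof.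
elim: k m => [|k IH] m /=.
  by rewrite !msizeC; split; apply: leq_b1.
have -> : (3 * k.+1 + 1 = (3 * k + 1) + 3)%N by lia.
split; apply: msize_sum_le => l _; (apply: leq_trans (msizeD_le _ _) _; rewrite geq_max;
  apply/andP; split; rewrite ?msizeN; apply: msize_spolM; apply IH).
Qed.
Lemma msize_accp (R : realType) N T (Q : qalg R N T) (r : restr N) :
  (msize (accp Q r) <= 6 * T + 3)%N.
Proof.
apply: msize_sum_le => k _.
have [h1 h2] := msize_ampf r T k.
apply: leq_trans (msizeD_le _ _) _; rewrite geq_max !expr2.
apply/andP; split; apply: leq_trans (msizeM_le _ _) _; lia.
Qed.
Lemma pow_mono (R : realType) (x y : R) n : 0 <= x -> x <= y -> x ^+ n <= y ^+ n.
Proof.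
move=> x0 xy; elim: n => [|n IH]; first by rewrite !expr0.
rewrite !exprS ler_pM // ?exprn_ge0 //.
Qed.

Lemma VrF_eq (R : realType) N (g h : input N -> R) : (forall X, g X = h X) -> VrF g = VrF h.
Proof.
by move=> gh; rewrite /VrF; congr (_ * _); apply: eq_bigr => X _; apply: eq_bigr => Y _; rewrite !gh.
Qed.

Lemma InfF_eq (R : realType) N (g h : input N -> R) i : (forall X, g X = h X) -> InfF g i = InfF h i.
Proof.
by move=> gh; rewrite /InfF; congr (_ * _); apply: eq_bigr => X _; rewrite !gh.
Qed.

Lemma VrF_cst (R : realType) N (c : R) : VrF (fun _ : input N => c) = 0.
Proof. by rewrite /VrF big1 ?mul0r // => X _; rewrite big1 // => Y _; rewrite subrr normr0. Qed.
Lemma hleaf_conj (R : realType) (C : nat)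
  (hC : forall (N d : nat) (p : {mpoly R[N]}) (eps : R),
      0 < eps -> mdegree p = d -> (forall X : input N, 0 <= peval p X <= 1) ->
      eps <= Vr p -> exists i : 'I_N, (eps / d%:R) ^+ C <= Inf p i)
  N T (Q : qalg R N T) (epsp : R) (D : nat) :
  0 < epsp -> (6 * T + 3 <= D)%N ->
  forall r, (forall i, InfF (gr (acc_prob Q) r) i < (epsp / D%:R) ^+ C) ->
    VrF (gr (acc_prob Q) r) < epsp.
Proof.
move=> e0 hD r hI; rewrite ltNge; apply/negP => hV.
have hpe : forall Y, peval (accp Q r) Y = gr (acc_prob Q) r Y by move=> Y; apply: accpE.
have hV' : epsp <= Vr (accp Q r) by rewrite Vr_VrF (VrF_eq hpe).
have hb : forall X, 0 <= peval (accp Q r) X <= 1.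
  by move=> X; rewrite hpe; apply: acc_prob_bounds.
have [i hi] := hC N (mdegree (accp Q r)) (accp Q r) epsp e0 erefl hb hV'.
have hms := msize_accp Q r.
have hd1 : (1 <= mdegree (accp Q r))%N.
  rewrite /mdegree; case: (leqP (msize (accp Q r)) 1) => [h|].
    exfalso; move: hV'; rewrite Vr_VrF.
    rewrite (VrF_eq (h := fun _ => (accp Q r)@_0)) ?VrF_cst.
      by rewrite leNgt e0.
    by move=> X; rewrite /peval {1}(msize1_polyC h) mevalC.
  by case: (msize (accp Q r)) => [|[|k]].
have hdD : (mdegree (accp Q r) <= D)%N by rewrite /mdegree; lia.
have hmon : (epsp / D%:R) ^+ C <= (epsp / (mdegree (accp Q r))%:R) ^+ C.
  apply: pow_mono; first by rewrite divr_ge0 // ltW.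
  rewrite ler_pM2l // lef_pV2 ?posrE ?ltr0n ?ler_nat //; lia.
move: (hI i); rewrite -(InfF_eq _ hpe) -Inf_InfF => h.
by move: (lt_le_trans h (le_trans hmon hi)); rewrite ltxx.
Qed.
Lemma sum_prod (R : realType) (I : finType) (F G : I -> R) :
  \sum_x \sum_y F x * G y = (\sum_x F x) * (\sum_y G y).
Proof. by rewrite mulr_suml; apply: eq_bigr => x _; rewrite mulr_sumr. Qed.

Lemma CS_fin (R : realType) (I : finType) (a b : I -> R) :
  (\sum_i a i * b i) ^+ 2 <= (\sum_i a i ^+ 2) * (\sum_i b i ^+ 2).
Proof.
have H0 : 0 <= \sum_x \sum_y (a x * b y - a y * b x) ^+ 2.
  by apply: sumr_ge0 => x _; apply: sumr_ge0 => y _; apply: sqr_ge0.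
have E : \sum_x \sum_y (a x * b y - a y * b x) ^+ 2 =
   \sum_x \sum_y (a x ^+ 2 * b y ^+ 2) + \sum_x \sum_y (b x ^+ 2 * a y ^+ 2)
   - (\sum_x \sum_y ((a x * b x) * (a y * b y))) *+ 2.
  rewrite -!big_split -sumrMnl -sumrB /=; apply: eq_bigr => x _.
  rewrite -!big_split -sumrMnl -sumrB /=; apply: eq_bigr => y _.
  by rewrite mulr2n; ring.
move: H0; rewrite E !sum_prod (mulrC (\sum_x b x ^+ 2)) -expr2 subr_ge0.
by rewrite -mulr2n -[_ *+ 2]mulr_natr -[X in _ <= X]mulr_natr ler_pM2r.
Qed.
Definition ipA (R : realType) m (A : pred 'I_m) (a b : 'cV[R[i]]_m) : R :=
  \sum_(k | A k) (complex.Re (a k 0) * complex.Re (b k 0) + complex.Im (a k 0) * complex.Im (b k 0)).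

Lemma CS_ipA (R : realType) m (A : pred 'I_m) (a b : 'cV[R[i]]_m) :
  ipA A a b ^+ 2 <= norm2 a * norm2 b.
Proof.
pose fa := fun p : 'I_m * bool => if A p.1 then (if p.2 then complex.Im (a p.1 0) else complex.Re (a p.1 0)) else 0.
pose fb := fun p : 'I_m * bool => if p.2 then complex.Im (b p.1 0) else complex.Re (b p.1 0).
have E1 : ipA A a b = \sum_p fa p * fb p.
  rewrite /ipA big_mkcond /= -(pair_big xpredT xpredT (fun k c => fa (k, c) * fb (k, c))) /=.
  apply: eq_bigr => k _; rewrite big_bool /fa /fb /=.
  by case: (A k); rewrite ?mul0r ?addr0 // addrC.
have E2 : \sum_p fb p ^+ 2 = norm2 b.
  rewrite -(pair_big xpredT xpredT (fun k c => fb (k, c) ^+ 2)) /=.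
  by apply: eq_bigr => k _; rewrite big_bool /fb /= /sqmod addrC.
have E3 : \sum_p fa p ^+ 2 <= norm2 a.
  rewrite -(pair_big xpredT xpredT (fun k c => fa (k, c) ^+ 2)) /=.
  apply: ler_sum => k _; rewrite big_bool /fa /= /sqmod.
  case: (A k); first by rewrite addrC.
  by rewrite expr0n /= addr0 addr_ge0 ?sqr_ge0.
rewrite E1 -E2; apply: le_trans (CS_fin _ _) _.
by rewrite ler_wpM2r // sumr_ge0 // => p _; apply: sqr_ge0.
Qed.

Definition nrm (R : realType) m (v : 'cV[R[i]]_m) : R := Num.sqrt (norm2 v).

Lemma nrm_ge0 (R : realType) m (v : 'cV[R[i]]_m) : 0 <= nrm v.
Proof. exact: sqrtr_ge0. Qed.

Lemma nrm_sq (R : realType) m (v : 'cV[R[i]]_m) : nrm v ^+ 2 = norm2 v.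
Proof. by rewrite sqr_sqrtr // norm2_ge0. Qed.

Lemma le_sqrt_of_sq (R : realType) (x y : R) : 0 <= y -> x ^+ 2 <= y -> x <= Num.sqrt y.
Proof.
move=> y0 h; apply: le_trans (ler_norm x) _.
by rewrite -sqrtr_sqr ler_wsqrtr.
Qed.

Lemma ipA_le (R : realType) m (A : pred 'I_m) (a b : 'cV[R[i]]_m) :
  ipA A a b <= nrm a * nrm b.
Proof.
rewrite /nrm -sqrtrM ?norm2_ge0 //; apply: le_sqrt_of_sq; last exact: CS_ipA.
by rewrite mulr_ge0 ?norm2_ge0.
Qed.


Lemma ipA_abs (R : realType) m (A : pred 'I_m) (a b : 'cV[R[i]]_m) :
  `|ipA A a b| <= nrm a * nrm b.
Proof.
rewrite /nrm -sqrtrM ?norm2_ge0 // -sqrtr_sqr ler_wsqrtr //.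
exact: CS_ipA.
Qed.

Lemma norm2D (R : realType) m (a b : 'cV[R[i]]_m) :
  norm2 (a + b) = norm2 a + norm2 b + 2 * ipA predT a b.
Proof.
rewrite /norm2 /ipA mulr_sumr -!big_split /=; apply: eq_bigr => k _.
rewrite !mxE /sqmod; case: (a k 0) => x1 x2; case: (b k 0) => y1 y2 /=; ring.
Qed.

Lemma nrm_triangle (R : realType) m (a b : 'cV[R[i]]_m) : nrm (a + b) <= nrm a + nrm b.
Proof.
rewrite {1}/nrm -[nrm a + nrm b]ger0_norm ?addr_ge0 ?nrm_ge0 // -sqrtr_sqr ler_wsqrtr //.
rewrite norm2D sqrrD !nrm_sq mulr2n; have h := ipA_le predT a b; move: h.
move: (ipA _ _ _) (nrm a * nrm b) (norm2 a) (norm2 b) => x y p q h; lra.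
Qed.

Lemma sqmodM (R : realType) (a z : R[i]) : sqmod (a * z) = sqmod a * sqmod z.
Proof. by case: a => a1 a2; case: z => z1 z2; rewrite /sqmod /=; ring. Qed.

Definition mass (R : realType) N T (Q : qalg R N T) (X : input N) (t : nat) (j : 'I_N) : R :=
  \sum_(k | qidx Q k == Some j) sqmod (qstate Q X t k 0).

Lemma mxBE (R : realType) m n (A B : 'M[R[i]]_(m, n)) i j : (A - B) i j = A i j - B i j.
Proof. by rewrite !mxE. Qed.

Lemma mxDE (R : realType) m n (A B : 'M[R[i]]_(m, n)) i j : (A + B) i j = A i j + B i j.
Proof. by rewrite !mxE. Qed.

Lemma norm2_oracle_diff (R : realType) N T (Q : qalg R N T) (X : input N) j
   (v : 'cV[R[i]]_((qdim Q).+1)) :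
  norm2 (oracle Q (flip X j) *m v - oracle Q X *m v) =
  4 * \sum_(k | qidx Q k == Some j) sqmod (v k 0).
Proof.
rewrite /norm2 (bigID (fun k => qidx Q k == Some j)) /= [X in _ + X]big1 ?addr0.
  rewrite mulr_sumr; apply: eq_bigr => k /eqP qk.
  rewrite mxBE !oracleE -mulrBl sqmodM qk /osign ffunE eqxx.
  by case: (X j); rewrite /sqmod /=; congr (_ * _); lra.
move=> k qk; rewrite mxBE !oracleE -mulrBl sqmodM.
case E: (qidx Q k) qk => [j'|] /= qk; last by rewrite subrr /sqmod /= expr0n /= addr0 mul0r.
rewrite /osign ffunE (_ : (j' == j) = false); last by apply/eqP => h; move: qk; rewrite h eqxx.
by rewrite subrr /sqmod /= expr0n /= addr0 mul0r.
Qed.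
Lemma nrm_unitary (R : realType) m (U : 'M[R[i]]_m) (v : 'cV[R[i]]_m) :
  U \is unitarymx -> nrm (U *m v) = nrm v.
Proof. by move=> uU; rewrite /nrm norm2_unitary. Qed.

Lemma nrm_oracle (R : realType) N T (Q : qalg R N T) X (v : 'cV[R[i]]_((qdim Q).+1)) :
  nrm (oracle Q X *m v) = nrm v.
Proof. by rewrite /nrm norm2_oracle. Qed.

Lemma hyb_step (R : realType) N T (Q : qalg R N T) (X : input N) j t :
  nrm (qstate Q (flip X j) t.+1 - qstate Q X t.+1) <=
  nrm (qstate Q (flip X j) t - qstate Q X t) + 2 * Num.sqrt (mass Q X t j).
Proof.
rewrite /= -mulmxBr nrm_unitary ?qU_unitary //.
set O' := oracle Q (flip X j); set O := oracle Q X.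
set p' := qstate Q (flip X j) t; set p := qstate Q X t.
have -> : O' *m p' - O *m p = O' *m (p' - p) + (O' *m p - O *m p).
  by rewrite mulmxBr addrA subrK.
apply: le_trans (nrm_triangle _ _) _; rewrite nrm_oracle lerD2l.
rewrite /nrm norm2_oracle_diff sqrtrM // (_ : (4 : R) = 2 ^+ 2); last lra.
by rewrite sqrtr_sqr ger0_norm.
Qed.
Lemma hyb_sum (R : realType) N T (Q : qalg R N T) (X : input N) j t :
  nrm (qstate Q (flip X j) t - qstate Q X t) <=
  \sum_(s < t) 2 * Num.sqrt (mass Q X s j).
Proof.
elim: t => [|t IH].
  by rewrite big_ord0 /= subrr /nrm /norm2 big1 ?sqrtr0 // => k _; rewrite mxE /sqmod /= expr0n /= addr0.
apply: le_trans (hyb_step Q X j t) _.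
by rewrite big_ord_recr /= lerD2r.
Qed.

Lemma acc_diff (R : realType) N T (Q : qalg R N T) (X : input N) j :
  (acc_prob Q (flip X j) - acc_prob Q X) ^+ 2 <=
  4 * nrm (qstate Q (flip X j) T - qstate Q X T) ^+ 2.
Proof.
set u := qstate Q (flip X j) T; set v := qstate Q X T.
have E : acc_prob Q (flip X j) - acc_prob Q X = ipA (fun k => k \in qacc Q) (u - v) (u + v).
  rewrite /acc_prob /ipA -sumrB; apply: eq_bigr => k _.
  rewrite mxBE mxDE /sqmod; case: (u k 0) => a b; case: (v k 0) => c d /=; ring.
rewrite E -real_normK ?num_real //.
have h1 := ipA_abs (fun k => k \in qacc Q) (u - v) (u + v).
have h2 : nrm (u + v) <= 2.
  apply: le_trans (nrm_triangle _ _) _.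
  by rewrite /nrm !norm2_qstate sqrtr1; lra.
have h3 := nrm_ge0 (u - v); have h4 := nrm_ge0 (u + v).
have h5 : `|ipA (fun k => k \in qacc Q) (u - v) (u + v)| <= 2 * nrm (u - v).
  by apply: le_trans h1 _; rewrite mulrC ler_wpM2r.
rewrite (_ : (4 : R) = 2 ^+ 2); last lra.
by rewrite -exprMn pow_mono.
Qed.

Lemma mass_sum (R : realType) N T (Q : qalg R N T) (X : input N) s :
  \sum_j mass Q X s j <= 1.
Proof.
rewrite -(norm2_qstate Q X s) /mass /norm2.
rewrite (eq_bigr (fun j => \sum_k (if qidx Q k == Some j then sqmod (qstate Q X s k 0) else 0))); last first.
  by move=> j _; rewrite big_mkcond.
rewrite exchange_big /=; apply: ler_sum => k _.
case E: (qidx Q k) => [j0|].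
  rewrite (bigD1 j0) //= eqxx big1 ?addr0 // => j /negbTE nj.
  by rewrite (_ : (Some j0 == Some j) = false) //; apply/eqP => -[h]; move: nj; rewrite h eqxx.
by rewrite big1 ?sqmod_ge0.
Qed.

Lemma hyb_total (R : realType) N T (Q : qalg R N T) (X : input N) :
  \sum_j (acc_prob Q X - acc_prob Q (flip X j)) ^+ 2 <= 16 * T%:R ^+ 2.
Proof.
have hj : forall j, (acc_prob Q X - acc_prob Q (flip X j)) ^+ 2 <=
                    16 * T%:R * \sum_(s < T) mass Q X s j.
  move=> j; rewrite -sqrrN opprB; apply: le_trans (acc_diff Q X j) _.
  have h1 := hyb_sum Q X j T.
  have h2 : nrm (qstate Q (flip X j) T - qstate Q X T) ^+ 2 <=
            (\sum_(s < T) 2 * Num.sqrt (mass Q X s j)) ^+ 2 by rewrite pow_mono ?nrm_ge0.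
  apply: le_trans (_ : 4 * (\sum_(s < T) 2 * Num.sqrt (mass Q X s j)) ^+ 2 <= _).
    by rewrite ler_pM2l.
  apply: le_trans (_ : 4 * (T%:R * \sum_(s < T) (2 * Num.sqrt (mass Q X s j)) ^+ 2) <= _).
    by rewrite ler_pM2l // -[X in X%:R * _](card_ord T) sum_sq_le.
  rewrite (eq_bigr (fun s : 'I_T => 4 * mass Q X s j)); last first.
    move=> s _; rewrite exprMn sqr_sqrtr; last by rewrite /mass sumr_ge0 // => k _; apply: sqmod_ge0.
    by congr (_ * _); lra.
  by rewrite -mulr_sumr mulrA mulrA (_ : (4 : R) * T%:R * 4 = 16 * T%:R) //; lra.
apply: le_trans (ler_sum _ (fun j _ => hj j)) _.
rewrite -mulr_sumr exchange_big /= expr2 mulrA ler_wpM2l ?mulr_ge0 //.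
apply: le_trans (_ : \sum_(s < T) (1:R) <= _).
  by apply: ler_sum => s _; apply: mass_sum.
by rewrite (eq_bigl (fun s : 'I_T => s \in {: 'I_T})) // sumr_const card_ord.
Qed.
Lemma leq_expl (a b e : nat) : (a <= b)%N -> (a ^ e <= b ^ e)%N.
Proof. by move=> ab; elim: e => [|e IH] //; rewrite !expnS leq_mul. Qed.

Lemma nat_bound (C T m : nat) : (1 <= m)%N ->
  (64 * T.+1 ^ 2 * m * (4 * (6 * T + 3) * m) ^ (2 * C) <=
   (64 * 24 ^ (2 * C) + 2 * C + 2) * (T.+1 * m) ^ (64 * 24 ^ (2 * C) + 2 * C + 2))%N.
Proof.
move=> m1.
set K := (64 * 24 ^ (2 * C) + 2 * C + 2)%N.
set P := (T.+1 * m)%N.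
have P1 : (0 < P)%N by rewrite /P muln_gt0.
have h1 : ((4 * (6 * T + 3) * m) ^ (2 * C) <= 24 ^ (2 * C) * P ^ (2 * C))%N.
  rewrite -expnMn; apply: leq_expl; rewrite /P; nia.
have h2 : (T.+1 ^ 2 * m <= P ^ 2)%N by rewrite /P; nia.
apply: leq_trans (_ : 64 * 24 ^ (2 * C) * P ^ (2 * C + 2) <= _)%N.
  rewrite -[(64 * _ * m)%N]mulnA.
  apply: leq_trans (leq_mul (leq_mul (leqnn 64) h2) h1) _.
  rewrite expnD; move: (P ^ 2)%N (P ^ (2 * C))%N (24 ^ (2 * C))%N => a b c; nia.
apply: leq_mul.
  by rewrite /K; move: (24 ^ (2 * C))%N => z; lia.
apply: leq_pexp2l => //; rewrite /K; move: (24 ^ (2 * C))%N => z; lia.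
Qed.
Lemma real_aux1 (R : realType) (y M eps delta : R) : y <= 2 * M -> eps * delta * y = 1 ->
  eps < 1 -> 0 < eps -> 0 < delta -> 1 <= M -> 1 <= 2 * M * delta.
Proof.
move=> h1 h2 h3 h4 h5 h6.
have ed : 0 < eps * delta by rewrite mulr_gt0.
have hdm : 0 <= delta * M by rewrite mulr_ge0 // ?ltW //; lra.
nra.
Qed.

Lemma real_aux2 (R : realType) (t P M A e d : R) : 1 <= A * e -> 1 <= 2 * M * d ->
  t <= P -> 0 <= t -> 0 <= d -> 0 <= A -> 0 <= e -> 0 <= M ->
  16 * t ^+ 2 <= d / 2 * (64 * P ^+ 2 * M * A ^+ 2 * e ^+ 2).
Proof.
move=> h1 h2 h3 h4 h5 h6 h7 h8.
have h9 : 1 <= (A * e) ^+ 2 by rewrite expr2; nra.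
have -> : d / 2 * (64 * P ^+ 2 * M * A ^+ 2 * e ^+ 2) = 16 * P ^+ 2 * (2 * M * d) * (A * e) ^+ 2.
  by rewrite exprMn; field.
have hP : t ^+ 2 <= P ^+ 2 by rewrite !expr2; nra.
have hP0 : 0 <= P ^+ 2 by rewrite sqr_ge0.
have : P ^+ 2 <= P ^+ 2 * (2 * M * d) by nra.
move=> h10.
have : P ^+ 2 * (2 * M * d) <= P ^+ 2 * (2 * M * d) * (A * e) ^+ 2 by nra.
nra.
Qed.

Lemma real_aux3 (R : realType) (d y M : R) : 0 <= d -> y <= 2 * M -> 2 * d * y <= 4 * d * M.
Proof. move=> *; nra. Qed.
Lemma main_case (R : realType) (C : nat)
  (hC : forall (N d : nat) (p : {mpoly R[N]}) (eps : R),
      0 < eps -> mdegree p = d -> (forall X : input N, 0 <= peval p X <= 1) ->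
      eps <= Vr p -> exists i : 'I_N, (eps / d%:R) ^+ C <= Inf p i)
  (eps delta : R) N T (Q : qalg R N T) :
  0 < eps -> eps < 1 -> 0 < delta -> delta < 1 ->
  let K := (64 * 24 ^ (2 * C) + 2 * C + 2)%N in
  exists t : dtree R N,
    ((depth t)%:R <= K%:R * (T.+1%:R / (eps * delta)) ^+ K) /\
    (1 - delta) * 2 ^+ N <=
      #|[set X : input N | `|deval t X - acc_prob Q X| <= eps]|%:R.
Proof.
move=> e0 e1 d0 d1 K.
pose y := (eps * delta)^-1.
have ed0 : 0 < eps * delta by rewrite mulr_gt0.
have ed1 : eps * delta < 1 by rewrite -[1]mulr1 ltr_pM // ltW.
have y1 : 1 < y by rewrite /y invf_gt1.
pose m := Num.truncn y.
have /andP [hm1 hm2] := truncn_itv (ltW (lt_trans ltr01 y1)).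
have m1 : (1 <= m)%N.
  have : (1 : R) < m.+1%:R by apply: lt_trans y1 hm2.
  by rewrite ltr1n.
pose D := (6 * T + 3)%N.
pose epsp := eps * delta / 2.
pose eta := (epsp / D%:R) ^+ C.
pose L := (64 * T.+1 ^ 2 * m * (4 * D * m) ^ (2 * C))%N.
exists (build (acc_prob Q) eta (r0 N) L).
split.
  apply: le_trans (_ : L%:R <= _); first by rewrite ler_nat depth_build.
  apply: le_trans (_ : K%:R * ((T.+1 * m)%N%:R) ^+ K <= _).
    by rewrite -natrX -natrM ler_nat nat_bound.
  rewrite ler_wpM2l // pow_mono // natrM mulrC.
  by rewrite [m%:R * _]mulrC ler_wpM2l.
have hB := hyb_total Q.
have ep0 : 0 < epsp by rewrite /epsp divr_gt0.
have D0 : (0 < D)%N by rewrite /D addn3.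
have eta0 : 0 < eta by rewrite /eta exprn_gt0 // divr_gt0 // ltr0n.
have hleaf := @hleaf_conj R C hC N T Q epsp D ep0 (leqnn D).
have L0 : (0 < L)%N by rewrite /L !muln_gt0 expn_gt0 !muln_gt0 m1 D0.
have Hbad := tree_bad eta0 e0 (ltW ep0) L0 hleaf hB.
rewrite count_good.
pose a : R := (4 * D * m)%N%:R.
have a0 : 0 < a by rewrite /a ltr0n !muln_gt0 D0 m1.
pose A := a ^+ C.
have A0 : 0 < A by rewrite /A exprn_gt0.
have M1 : 1 <= m%:R :> R by rewrite ler1n.
have hy2 : y <= 2 * m%:R.
  by move: hm2; rewrite -addn1 natrD => h; lra.
have E1 : epsp / D%:R = (2 * D%:R * y)^-1.
  rewrite /epsp /y invfM invrK; field.
  by rewrite pnatr_eq0 -lt0n D0.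
have hz : a^-1 <= epsp / D%:R.
  rewrite E1 lef_pV2 ?posrE ?a0 ?mulr_gt0 ?ltr0n // ?(lt_trans ltr01 y1) //.
  rewrite /a !natrM; apply: real_aux3 => //.
have hw : A^-1 <= eta.
  rewrite /A /eta -exprVn; apply: pow_mono => //.
  by rewrite invr_ge0 ltW.
have hAe : 1 <= A * eta.
  have h := mulfV (lt0r_neq0 A0); rewrite -h.
  by apply: ler_wpM2l; [exact: ltW | exact: hw].
have hyed : eps * delta * y = 1 by rewrite /y mulfV // lt0r_neq0.
have hmd : 1 <= 2 * m%:R * delta by apply: (real_aux1 hy2 hyed).
have hL : L%:R = 64 * T.+1%:R ^+ 2 * m%:R * A ^+ 2 :> R.
  by rewrite /L /A /a (mulnC 2 C) !natrM !natrX exprM !natrM [T.+1%:R ^+ 2]expr2.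
have hBL : 16 * T%:R ^+ 2 / (L%:R * eta ^+ 2) <= delta / 2.
  have hLe : 0 < L%:R * eta ^+ 2 by apply: mulr_gt0; [rewrite ltr0n | rewrite exprn_gt0].
  rewrite ler_pdivrMr // hL.
  apply: real_aux2 => //; rewrite ?ler_nat ?ltW //; lra.
have hbad : Bad (acc_prob Q) eps (r0 N) (build (acc_prob Q) eta (r0 N) L) <= delta.
  apply: le_trans Hbad _; rewrite /epsp.
  have -> : eps * delta / 2 / eps = delta / 2 by field; rewrite gt_eqF.
  move: hBL; move: (16 * _ / _) => z; lra.
rewrite [X in X <= _]mulrC; apply: ler_wpM2l; first by rewrite exprn_ge0.
lra.
Qed.
Lemma leaf_ok (R : realType) (K : nat) (eps delta : R) N T (Q : qalg R N T) :
  0 < eps -> 0 < delta -> (1 <= eps \/ 1 <= delta) ->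
  exists t : dtree R N,
    ((depth t)%:R <= K%:R * (T.+1%:R / (eps * delta)) ^+ K) /\
    (1 - delta) * 2 ^+ N <=
      #|[set X : input N | `|deval t X - acc_prob Q X| <= eps]|%:R.
Proof.
move=> e0 d0 h; exists (DLeaf N 0); split.
  by rewrite /= mulr_ge0 // exprn_ge0 // divr_ge0 // mulr_ge0 // ltW.
case: h => [e1|d1].
  have -> : [set X : input N | `|deval (DLeaf N 0) X - acc_prob Q X| <= eps] = setT.
    apply/setP => X; rewrite !inE /= sub0r normrN.
    have /andP [h1 h2] := acc_prob_bounds Q X.
    by rewrite ger0_norm // (le_trans h2 e1).
  rewrite cardsT card_input natrX.
  have : 0 <= (2 : R) ^+ N by rewrite exprn_ge0.
  move: (2 ^+ N : R) => P hP; nra.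
have : 0 <= (2 : R) ^+ N by rewrite exprn_ge0.
have : 0 <= (#|[set X : input N | `|deval (DLeaf N 0) X - acc_prob Q X| <= eps]|%:R : R) by [].
move: (2 ^+ N : R) (#|_|%:R : R) => P Z hZ hP; nra.
Qed.

Unset Implicit Arguments.
Local Close Scope sesquilinear_scope.
Theorem theorem21 (R : realType) :
  influence_conjecture R ->
  exists K : nat,
    forall (eps delta : R), 0 < eps -> 0 < delta ->
    forall (N T : nat) (Q : qalg R N T),
      exists t : dtree R N,
        ((depth t)%:R <= K%:R * (T.+1%:R / (eps * delta)) ^+ K) /\
        (1 - delta) * 2 ^+ N <=
          #|[set X : input N | `|deval t X - acc_prob Q X| <= eps]|%:R.
Proof.
case=> C hC; exists (64 * 24 ^ (2 * C) + 2 * C + 2)%N => eps delta e0 d0 N T Q.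
case: (ltP eps 1) => e1; last by apply: leaf_ok => //; left.
case: (ltP delta 1) => d1; last by apply: leaf_ok => //; right.
exact: main_case.
Qed.
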